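(* Let $\Gamma$ be a group and $\Delta$ a finite set of distinct elements generating $\Gamma$. If there exists a homogeneous scalar quantum walk on the Cayley graph $C_\Delta(\Gamma)$, then for every ordered pair $(\delta_1,\delta_2)$ of distinct elements of $\Delta$ there exists an ordered pair $(\delta_3,\delta_4)\neq(\delta_1,\delta_2)$ of elements of $\Delta$ such that $\delta_1\delta_2^{-1}=\delta_3\delta_4^{-1}$.
   Context: The Cayley graph $C_\Delta(\Gamma)$ has vertex set $\Gamma$ and directed edges $(g,g\delta)$ for $g\in\Gamma$, $\delta\in\Delta$. Let $\ell^2(\Gamma)$ have orthonormal basis $\{|g\rangle\}_{g\in\Gamma}$, and for $\delta\in\Gamma$ let $U_\delta$ be the unitary operator on $\ell^2(\Gamma)$ with $U_\delta|g\rangle=|g\delta\rangle$. A homogeneous scalar quantum walk on $C_\Delta(\Gamma)$ is a unitary operator $W=\sum_{\delta\in\Delta}W_\delta U_\delta$ on $\ell^2(\Gamma)$ with complex coefficients $W_\delta$ that are all nonzero (a vanishing coefficient would amount to removing the edges labeled by that generator). *)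

(* Defs.v *)
From mathcomp Require Import all_boot all_order all_algebra.
From mathcomp Require Import all_classical all_reals.
From mathcomp Require Import esum.
From mathcomp Require Import complex.
Set Implicit Arguments. Unset Strict Implicit. Unset Printing Implicit Defensive.
Import Order.TTheory GRing.Theory Num.Theory.
Local Open Scope classical_set_scope.
Local Open Scope ring_scope.

Definition is_group (G : Type) (mul : G -> G -> G) (one : G) (inv : G -> G)
  : Prop :=
  [/\ forall x y z, mul x (mul y z) = mul (mul x y) z,
      forall x, mul one x = x, forall x, mul x one = x,
      forall x, mul (inv x) x = one & forall x, mul x (inv x) = one].

Definition generates (G : Type) (mul : G -> G -> G) (one : G) (inv : G -> G)
  (Delta : set G) : Prop :=
  forall H : set G,
    H one -> (forall x y, H x -> H y -> H (mul x y)) ->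
    (forall x, H x -> H (inv x)) -> Delta `<=` H -> H = setT.

Definition cnorm2 (R : rcfType) (z : R[i]) : R :=
  complex.Re z ^+ 2 + complex.Im z ^+ 2.

Definition l2norm2 (R : realType) (G : choiceType) (f : G -> R[i]) : \bar R :=
  \esum_(g in setT) ((cnorm2 (f g))%:E).

Definition in_l2 (R : realType) (G : choiceType) (f : G -> R[i]) : Prop :=
  (l2norm2 f < +oo)%E.

(* The operator W = \sum_(d in Delta) W_d U_d acting on functions
   f = \sum_h f(h) |h>, where U_d |h> = |h d>:
   (W f)(g) = \sum_(d in Delta) W_d f(g d^-1). *)
Definition walk_op (R : realType) (G : choiceType) (mul : G -> G -> G)
  (inv : G -> G) (Delta : seq G) (W : G -> R[i]) (f : G -> R[i]) : G -> R[i] :=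
  fun g => \sum_(d <- Delta) W d * f (mul g (inv d)).

(* W is a unitary operator on l^2(G): it maps l^2(G) into itself
   isometrically and onto l^2(G) (W is linear by construction). *)
Definition unitary_on_l2 (R : realType) (G : choiceType)
  (T : (G -> R[i]) -> (G -> R[i])) : Prop :=
  (forall f, in_l2 f -> in_l2 (T f) /\ l2norm2 (T f) = l2norm2 f) /\
  (forall f, in_l2 f -> exists h, in_l2 h /\ T h = f).

Definition homogeneous_scalar_QW (R : realType) (G : choiceType)
  (mul : G -> G -> G) (inv : G -> G) (Delta : seq G) (W : G -> R[i]) : Prop :=
  (forall d, d \in Delta -> W d != 0) /\
  unitary_on_l2 (walk_op mul inv Delta W).

(* Main.v *)
Require Import Defs.
From mathcomp Require Import all_boot all_order all_algebra.
From mathcomp Require Import all_classical all_reals.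
From mathcomp Require Import complex.
From mathcomp Require Import esum.
From mathcomp Require Import ring lra.
Import Order.TTheory GRing.Theory Num.Theory.
Local Open Scope ring_scope.

Lemma esum_delta (R : realType) (G : choiceType) (x : G) (r : R) : (0 <= r)%R ->
  (\esum_(g in setT) (if g == x then r else 0)%:E = r%:E)%E.
Proof.
move=> r0.
transitivity (\esum_(g in [set x]) (if g == x then r else 0)%:E)%E; last first.
  by rewrite esum_set1 eqxx // lee_fin.
rewrite [RHS]esum_mkcond; apply: eq_esum => g _.
case: eqP => [->|ne]; first by rewrite mem_set.
by rewrite memNset.
Qed.

Lemma cnorm2_ge0 (R : rcfType) (z : R[i]) : 0 <= cnorm2 z.
Proof. by rewrite /cnorm2 addr_ge0 // sqr_ge0. Qed.

Lemma cnorm2_0 (R : rcfType) : cnorm2 (0 : R[i]) = 0.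
Proof. by rewrite /cnorm2 /= expr0n /= addr0. Qed.

Lemma cnorm2_gt0 (R : rcfType) (z : R[i]) : z != 0 -> 0 < cnorm2 z.
Proof.
case: z => p q hz; rewrite /cnorm2 /=.
rewrite lt0r addr_ge0 ?sqr_ge0 // andbT paddr_eq0 ?sqr_ge0 // !sqrf_eq0.
by apply: contra hz => /andP[/eqP-> /eqP->].
Qed.

Theorem proposition2 (R : realType) (G : choiceType)
  (mul : G -> G -> G) (one : G) (inv : G -> G) (Delta : seq G) :
  is_group mul one inv ->
  uniq Delta ->
  generates mul one inv [set d | d \in Delta] ->
  (exists W : G -> R[i], homogeneous_scalar_QW mul inv Delta W) ->
  forall d1 d2, d1 \in Delta -> d2 \in Delta -> d1 != d2 ->
  exists d3 d4, [/\ d3 \in Delta, d4 \in Delta, (d3, d4) != (d1, d2) &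
                    mul d1 (inv d2) = mul d3 (inv d4)].
Proof.
move=> [mA m1 m1r mV mVr] Hu _ [W [HW0 [Hiso _]]] d1 d2 d1D d2D d12.
case: (pselect (exists d3 d4, [/\ d3 \in Delta, d4 \in Delta, (d3, d4) != (d1, d2) &
                    mul d1 (inv d2) = mul d3 (inv d4)])) => // Hno; exfalso.
have eq1 : forall g d, mul g (inv d) = one -> g = d.
  move=> g d H; by rewrite -[g]m1r -(mV d) mA H m1.
have invinj : forall x y, inv x = inv y -> x = y.
  move=> x y H; by rewrite -[x]m1r -(mV y) -H mA mVr m1.
have canc : forall d, mul d1 (inv d) = mul d1 (inv d2) -> d = d2.
  move=> d H; apply: invinj.
  have := congr1 (mul (inv d1)) H; by rewrite !mA !mV !m1.
set a := mul d1 (inv d2).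
have uniq_pair : forall d3 d4, d3 \in Delta -> d4 \in Delta ->
    mul d3 (inv d4) = a -> d3 = d1 /\ d4 = d2.
  move=> d3 d4 h3 h4 e; case E: ((d3, d4) == (d1, d2)).
    by move/eqP: E => [-> ->].
  exfalso; apply: Hno; exists d3, d4; split => //; first by rewrite E.
have a1 : a != one.
  by apply/eqP => /eq1 e; rewrite e eqxx in d12.
pose al : R[i] := Complex (complex.Re (W d1)) (- complex.Im (W d1)).
pose be : R[i] := Complex (complex.Re (W d2)) (- complex.Im (W d2)).
pose f1 := fun g => if g == one then al else 0.
pose f2 := fun g => if g == a then be else 0.
pose T := walk_op mul inv Delta W.
pose n1 := cnorm2 (W d1).
pose n2 := cnorm2 (W d2).
have Tf1d1 : T f1 d1 = W d1 * al.
  rewrite /T /walk_op (bigD1_seq d1) //= big1 ?addr0 => [|d nd].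
    by rewrite /f1 mVr eqxx.
  rewrite /f1 ifN ?mulr0 //; apply/eqP => /eq1 e; by rewrite e eqxx in nd.
have Tf2d1 : T f2 d1 = W d2 * be.
  rewrite /T /walk_op (bigD1_seq d2) //= big1 ?addr0 => [|d nd].
    by rewrite /f2 eqxx.
  rewrite /f2 ifN ?mulr0 //; apply/eqP => /canc e; by rewrite e eqxx in nd.
have Tzero : forall g, g != d1 -> T f1 g = 0 \/ T f2 g = 0.
  move=> g ng.
  case: (pselect (exists2 d, d \in Delta & mul g (inv d) = one)) =>
    [[d dD gd]|nd1]; last first.
    left; rewrite /T /walk_op big1_seq // => d /andP[_ dD].
    rewrite /f1 ifN ?mulr0 //; apply/eqP => e; apply nd1; by exists d.
  case: (pselect (exists2 d, d \in Delta & mul g (inv d) = a)) =>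
    [[d' dD' gd']|nd2]; last first.
    right; rewrite /T /walk_op big1_seq // => d0 /andP[_ dD0].
    rewrite /f2 ifN ?mulr0 //; apply/eqP => e; apply nd2; by exists d0.
  exfalso; have gd2 := eq1 _ _ gd; rewrite gd2 in gd' ng.
  have [e _] := uniq_pair _ _ dD dD' gd'.
  by rewrite e eqxx in ng.
have Tsplit : forall g, T (fun h => f1 h + f2 h) g = T f1 g + T f2 g.
  by move=> g; rewrite /T /walk_op -big_split; apply: eq_bigr => d _; rewrite mulrDr.
have cross : forall g, cnorm2 (T f1 g + T f2 g) =
    cnorm2 (T f1 g) + cnorm2 (T f2 g) + (if g == d1 then 2 * n1 * n2 else 0).
  move=> g; case: eqP => [->|/eqP ng].
    rewrite Tf1d1 Tf2d1 /al /be /n1 /n2.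
    case: (W d1) => p q; case: (W d2) => r s; rewrite /cnorm2 /=; ring.
  by case: (Tzero g ng) => ->; rewrite ?add0r ?addr0 cnorm2_0 ?add0r ?addr0.
have fsplit : forall g, cnorm2 (f1 g + f2 g) = cnorm2 (f1 g) + cnorm2 (f2 g).
  move=> g; rewrite /f1 /f2; case: (eqVneq g one) => [->|ng].
    by rewrite eq_sym (negbTE a1) addr0 cnorm2_0 addr0.
  by rewrite add0r cnorm2_0 add0r.
have Nf1 : l2norm2 f1 = (cnorm2 al)%:E.
  rewrite /l2norm2 -(@esum_delta _ _ one _ (cnorm2_ge0 _ al)); apply: eq_esum => g _.
  by rewrite /f1; case: eqP => // _; rewrite cnorm2_0.
have Nf2 : l2norm2 f2 = (cnorm2 be)%:E.
  rewrite /l2norm2 -(@esum_delta _ _ a _ (cnorm2_ge0 _ be)); apply: eq_esum => g _.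
  by rewrite /f2; case: eqP => // _; rewrite cnorm2_0.
have Nf : l2norm2 (fun h => f1 h + f2 h) = (cnorm2 al + cnorm2 be)%:E.
  rewrite /l2norm2 (eq_esum (b := fun g => (cnorm2 (f1 g))%:E + (cnorm2 (f2 g))%:E)%E);
    last by move=> g _; rewrite fsplit EFinD.
  rewrite esumD; last 2 first.
  - by move=> g _; rewrite lee_fin cnorm2_ge0.
  - by move=> g _; rewrite lee_fin cnorm2_ge0.
  by move: Nf1 Nf2; rewrite /l2norm2 => -> ->.
have l2f1 : in_l2 f1 by rewrite /in_l2 Nf1 ltry.
have l2f2 : in_l2 f2 by rewrite /in_l2 Nf2 ltry.
have l2f : in_l2 (fun h => f1 h + f2 h) by rewrite /in_l2 Nf ltry.
have [_ NT1] := Hiso _ l2f1.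
have [_ NT2] := Hiso _ l2f2.
have [_ NT] := Hiso _ l2f.
rewrite -/T in NT1 NT2 NT.
have NTe : l2norm2 (T (fun h => f1 h + f2 h)) =
    (l2norm2 (T f1) + l2norm2 (T f2) + (2 * n1 * n2)%:E)%E.
  rewrite /l2norm2 (eq_esum (b := fun g => (cnorm2 (T f1 g))%:E + (cnorm2 (T f2 g))%:E
      + (if g == d1 then 2 * n1 * n2 else 0)%:E)%E);
    last by move=> g _; rewrite Tsplit cross !EFinD.
  have n12 : 0 <= 2 * n1 * n2 by rewrite !mulr_ge0 // cnorm2_ge0.
  rewrite esumD; last 2 first.
  - by move=> g _; rewrite adde_ge0 // lee_fin cnorm2_ge0.
  - by move=> g _; rewrite lee_fin; case: eqP.
  rewrite esumD; last 2 first.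
  - by move=> g _; rewrite lee_fin cnorm2_ge0.
  - by move=> g _; rewrite lee_fin cnorm2_ge0.
  by rewrite esum_delta.
move: NTe; rewrite NT NT1 NT2 Nf Nf1 Nf2 -!EFinD => /eqP; rewrite eqe => /eqP e.
have p1 : 0 < n1 by apply: cnorm2_gt0; apply: HW0.
have p2 : 0 < n2 by apply: cnorm2_gt0; apply: HW0.
have : 0 < 2 * n1 * n2 by rewrite !mulr_gt0.
  move=> h; move: e; set X := cnorm2 al + cnorm2 be.
  rewrite -{1}[X]addr0 => /addrI e.
  by rewrite -e ltxx in h.
Qed.
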